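(* Let $N\ge1$, $r_i>0$, $S_u=\bigsqcup_{i=1}^N\{i\}\times[0,r_i]$, $p_i,q_i\in[0,1]$, $c_i,d_i>0$, and $\mathfrak p_{i,1},\mathfrak p_{i,2}$ ($i=1,\dots,N$) Borel sub-probability measures on $S_u$. Let $A$ be the operator $(Af)_i=\tfrac12 f_i''$ on the domain of $f=\sum_if_i\in C(S_u)$ with $f_i\in C^2[0,r_i]$ and $$p_if_i''(0)-(1-p_i)f_i'(0)+c_if_i(0)=c_i\int f\,\mathrm d\mathfrak p_{i,1},\qquad q_if_i''(r_i)+(1-q_i)f_i'(r_i)+d_if_i(r_i)=d_i\int f\,\mathrm d\mathfrak p_{i,2}.$$ Let $R^{co}_\lambda$, $\lambda>0$, be the Feller resolvent on $C(S_u)$ of the concatenation, by means of the measures $\mathfrak p_{i,j}$, of the processes generated by the operators $A_i f=\tfrac12f''$ on $C[0,r_i]$ with domains $\{f\in C^2[0,r_i]: p_if''(0)-(1-p_i)f'(0)+c_if(0)=0,\ q_if''(r_i)+(1-q_i)f'(r_i)+d_if(r_i)=0\}$. Then $A$ coincides with the generator $A^{co}$ of the Feller semigroup whose resolvent is $R^{co}_\lambda$, $\lambda>0$; in particular $A$ is a Feller generator.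
   Context: For $\lambda>0$, $s=\sqrt{2\lambda}$, set $a^i_{1,1}=2\lambda p_i-s(1-p_i)+c_i$, $a^i_{1,2}=2\lambda p_i+s(1-p_i)+c_i$, $a^i_{2,1}=e^{sr_i}(2\lambda q_i+s(1-q_i)+d_i)$, $a^i_{2,2}=e^{-sr_i}(2\lambda q_i-s(1-q_i)+d_i)$, $W_i=a^i_{1,1}a^i_{2,2}-a^i_{1,2}a^i_{2,1}$, $\ell^{i,1}_\lambda(x)=\frac{c_i}{W_i}(a^i_{2,2}e^{sx}-a^i_{2,1}e^{-sx})$, $\ell^{i,2}_\lambda(x)=\frac{d_i}{W_i}(a^i_{1,1}e^{-sx}-a^i_{1,2}e^{sx})$ on $[0,r_i]$, zero elsewhere. With $R_{\lambda,i}=(\lambda-A_i)^{-1}$ and $R^{du}_\lambda g=\sum_iR_{\lambda,i}g_i$, the concatenation resolvent is $R^{co}_\lambda g=R^{du}_\lambda g+\sum_{i}\sum_{j=1}^2u_{i,j}\ell^{i,j}_\lambda$, where $(u_{i,j})$ is the unique solution of $u_{i,j}=\int R^{du}_\lambda g\,\mathrm d\mathfrak p_{i,j}+\sum_{k,l}u_{k,l}\int\ell^{k,l}_\lambda\,\mathrm d\mathfrak p_{i,j}$. A Feller semigroup is a strongly continuous semigroup of positive contractions with $T(0)=I$, not necessarily conservative. *)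

(* Defs.v *)
From HB Require Import structures.
From mathcomp Require Import all_boot all_order all_algebra.
From mathcomp Require Import all_classical all_reals all_analysis.
From Stdlib Require Import ClassicalEpsilon.
Set Implicit Arguments. Unset Strict Implicit. Unset Printing Implicit Defensive.
Import Order.TTheory GRing.Theory Num.Theory.
Import numFieldNormedType.Exports.
Local Open Scope classical_set_scope.
Local Open Scope ring_scope.

(* A function on S_u = disjoint union of {i} x [0, r_i] (i < N) is
   represented as f : 'I_N -> R -> R; only the values f i x for
   x in [0, r i] matter.  A Borel measure on S_u is represented as a family
   (mu k)_{k < N} of Borel measures on R, mu k carried by [0, r k]. *)

Section Defs.
Variable R : realType.
Variable N : nat.
Variable r : 'I_N -> R.

(* f belongs to C^2[a,b] with first/second derivative f1, f2
   (one-sided at the end points, obtained by continuity). *)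
Definition C2_on (a b : R) (f f1 f2 : R -> R) : Prop :=
  [/\ {within `[a, b], continuous f},
      {within `[a, b], continuous f1},
      {within `[a, b], continuous f2},
      (forall x, a < x < b -> is_derive x 1 f (f1 x)) &
      (forall x, a < x < b -> is_derive x 1 f1 (f2 x))].

Definition contS (f : 'I_N -> R -> R) : Prop :=
  forall i, {within `[0, r i], continuous (f i)}.

Definition intS (mu : 'I_N -> {measure set R -> \bar R})
  (f : 'I_N -> R -> R) : R :=
  \sum_(k < N) Rintegral (mu k) `[0, r k] (f k).

Definition subprobS (mu : 'I_N -> {measure set R -> \bar R}) : Prop :=
  (forall k, mu k (~` `[0, r k]) = 0%E) /\
  (\sum_(k < N) mu k setT <= 1)%E.

Variables (p q c d : 'I_N -> R).
Variable P : 'I_N -> 'I_2 -> 'I_N -> {measure set R -> \bar R}.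
(* P i ord0 = p_{i,1}, P i ord1 = p_{i,2} *)

Definition graphA (f h : 'I_N -> R -> R) : Prop :=
  forall i, exists f1 f2 : R -> R,
    [/\ C2_on 0 (r i) (f i) f1 f2,
        p i * f2 0 - (1 - p i) * f1 0 + c i * f i 0
          = c i * intS (P i ord0) f,
        q i * f2 (r i) + (1 - q i) * f1 (r i) + d i * f i (r i)
          = d i * intS (P i ord_max) f &
        forall x, x \in `[0, r i] -> h i x = f2 x / 2].

Definition graphAi (i : 'I_N) (f h : R -> R) : Prop :=
  exists f1 f2 : R -> R,
    [/\ C2_on 0 (r i) f f1 f2,
        p i * f2 0 - (1 - p i) * f1 0 + c i * f 0 = 0,
        q i * f2 (r i) + (1 - q i) * f1 (r i) + d i * f (r i) = 0 &
        forall x, x \in `[0, r i] -> h x = f2 x / 2].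

Definition is_resolvent_i (l : R) (i : 'I_N) (Rl : (R -> R) -> R -> R) : Prop :=
  (forall g, {within `[0, r i], continuous g} ->
     graphAi i (Rl g) (fun x => l * Rl g x - g x)) /\
  (forall f h, graphAi i f h -> forall g,
     (forall x, x \in `[0, r i] -> g x = l * f x - h x) ->
     forall x, x \in `[0, r i] -> Rl g x = f x).

Definition ell (l : R) (i : 'I_N) (j : 'I_2) (x : R) : R :=
  let s := Num.sqrt (2 * l) in
  let a11 := 2 * l * p i - s * (1 - p i) + c i in
  let a12 := 2 * l * p i + s * (1 - p i) + c i in
  let a21 := expR (s * r i) * (2 * l * q i + s * (1 - q i) + d i) in
  let a22 := expR (- (s * r i)) * (2 * l * q i - s * (1 - q i) + d i) in
  let W := a11 * a22 - a12 * a21 in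
  if j == ord0 then c i / W * (a22 * expR (s * x) - a21 * expR (- (s * x)))
  else d i / W * (a11 * expR (- (s * x)) - a12 * expR (s * x)).

Definition ellS (l : R) (i : 'I_N) (j : 'I_2) : 'I_N -> R -> R :=
  fun k x => if k == i then ell l i j x else 0.

Variable Rr : R -> 'I_N -> (R -> R) -> R -> R.

Definition Rdu (l : R) (g : 'I_N -> R -> R) : 'I_N -> R -> R :=
  fun i => Rr l i (g i).

Definition coeff_system (l : R) (g : 'I_N -> R -> R) (u : 'I_N -> 'I_2 -> R) :=
  forall i j, u i j = intS (P i j) (Rdu l g)
                      + \sum_(k < N) \sum_(m < 2) u k m * intS (P i j) (ellS l k m).

Definition coeff (l : R) (g : 'I_N -> R -> R) : 'I_N -> 'I_2 -> R :=
  epsilon (inhabits (fun _ _ => 0)) (coeff_system l g).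

Definition Rco (l : R) (g : 'I_N -> R -> R) : 'I_N -> R -> R :=
  fun k x => Rdu l g k x
             + \sum_(i < N) \sum_(j < 2) coeff l g i j * ellS l i j k x.

End Defs.

(* Main.v *)
Require Import Defs.
From HB Require Import structures.
From mathcomp Require Import all_boot all_order all_algebra.
From mathcomp Require Import all_classical all_reals all_analysis.
From mathcomp Require Import ring lra measurable_realfun.
From Stdlib Require Import ClassicalEpsilon.
Import Order.TTheory GRing.Theory Num.Theory.
Import numFieldNormedType.Exports.
Local Open Scope classical_set_scope.
Local Open Scope ring_scope.

Section ExpLemmas.
Context {R : realType}.

Lemma D_expk (k x : R) : is_derive x 1 (fun z => expR (k * z)) (k * expR (k * x)).
Proof.
have h1 : is_derive x 1 (fun z : R => k * z) k.
  have H := @is_deriveZ R R R id k x 1 1 (is_derive_id x 1).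
  have -> : (fun z : R => k * z) = k \*: id by [].
  by rewrite -[X in is_derive _ _ _ X]mulr1.
have := is_derive1_comp (is_derive_expR (k * x)) h1.
by rewrite mulrC.
Qed.

End ExpLemmas.
Section Ex.
Context {R : realType}.

Lemma is_derive_lin2 (f g : R -> R) (x a b df dg : R) :
  is_derive x 1 f df -> is_derive x 1 g dg ->
  is_derive x 1 (fun z => a * f z + b * g z) (a * df + b * dg).
Proof.
move=> Hf Hg.
have H := is_deriveD (is_deriveZ a Hf) (is_deriveZ b Hg).
have -> : (fun z => a * f z + b * g z) = a \*: f + b \*: g by [].
exact: H.
Qed.

Definition ex (s A B x : R) := A * expR (s * x) + B * expR (- (s * x)).

Lemma D_ex (s A B x : R) : is_derive x 1 (ex s A B) (ex s (s * A) (- (s * B)) x).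
Proof.
have h2 : (fun z => expR (- (s * z))) = (fun z => expR ((- s) * z)).
  by apply/funext => z; rewrite mulNr.
have H := @is_derive_lin2 _ _ x A B _ _ (D_expk s x) (D_expk (- s) x).
have -> : ex s (s * A) (- (s * B)) x = A * (s * expR (s * x)) + B * (- s * expR (- s * x)).
  by rewrite /ex !mulNr; ring.
rewrite /ex; have -> : (fun z => A * expR (s * z) + B * expR (- (s * z)))
   = (fun z => A * expR (s * z) + B * expR ((- s) * z)).
  by apply/funext => z; rewrite mulNr.
exact: H.
Qed.

Lemma cont_ex (s A B : R) : continuous (ex s A B).
Proof.
move=> x; apply: differentiable_continuous; apply/derivable1_diffP.
by have [] := D_ex s A B x.
Qed.

End Ex.
Section Conv.
Context {R : realType}.
Lemma conv_bound (P Q E y : R) : 1 <= y -> y <= E ->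
  P * y + Q / y <= Num.max (Num.max (P + Q) (P * E + Q / E)) 0.
Proof.
move=> y1 yE.
have y0 : 0 < y by lra.
have E0 : 0 < E by lra.
have [Q0|Q0] := lerP 0 Q.
  have [E1|E1] := eqVneq E 1.
    have -> : y = 1 by lra.
    by rewrite divr1 mulr1 !le_max lexx.
  have E1' : 1 < E by rewrite lt_neqAle eq_sym E1; lra.
  have key : (E - 1) * (P * y + Q / y) <= (E - y) * (P + Q) + (y - 1) * (P * E + Q / E).
    have H : (E - y) * (P + Q) + (y - 1) * (P * E + Q / E) - (E - 1) * (P * y + Q / y)
       = Q * ((y - 1) * (E - 1) * (E - y)) / (y * E).
      by field; rewrite !gt_eqF.
    rewrite -subr_ge0 H; apply: divr_ge0; last by apply: mulr_ge0; lra.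
    apply: mulr_ge0 => //; apply: mulr_ge0; [apply: mulr_ge0|]; lra.
  set M := Num.max _ _.
  have h1 : P + Q <= M by rewrite /M !le_max lexx.
  have h2 : P * E + Q / E <= M by rewrite /M !le_max lexx orbT.
  have : (E - y) * (P + Q) + (y - 1) * (P * E + Q / E) <= (E - 1) * M.
    have := ler_wpM2l (x := E - y) (ltac:(lra)) h1.
    have := ler_wpM2l (x := y - 1) (ltac:(lra)) h2. lra.
  move=> H; have : (E - 1) * (P * y + Q / y) <= (E - 1) * M by lra.
  by rewrite ler_pM2l //; lra.
have [P0|P0] := lerP 0 P.
  have h1 : P * y <= P * E by apply: ler_wpM2l.
  have h2 : Q / y <= Q / E.
    have H : Q / E - Q / y = (- Q) * (E - y) / (y * E) by field; rewrite !gt_eqF.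
    rewrite -subr_ge0 H; apply: divr_ge0; last by apply: mulr_ge0; lra.
    apply: mulr_ge0; lra.
  have : P * E + Q / E <= Num.max (Num.max (P + Q) (P * E + Q / E)) 0.
    by rewrite !le_max lexx orbT.
  lra.
have : P * y + Q / y < 0.
  have iy : 0 < y^-1 by rewrite invr_gt0.
  have : P * y < 0 by nra.
  have : Q / y < 0 by nra.
  lra.
have : 0 <= Num.max (Num.max (P + Q) (P * E + Q / E)) 0 by rewrite le_max lexx orbT.
lra.
Qed.
End Conv.

Section EllAlg.
Context {R : realType}.
Variables (l r p q c d : R).

Definition sg : R := Num.sqrt (2 * l).
Definition ga11 := 2 * l * p - sg * (1 - p) + c.
Definition ga12 := 2 * l * p + sg * (1 - p) + c.
Definition gC := 2 * l * q + sg * (1 - q) + d.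
Definition gD := 2 * l * q - sg * (1 - q) + d.
Definition gE := expR (sg * r).
Definition gW := ga11 * (gE^-1 * gD) - ga12 * (gE * gC).

Definition ellg (j : 'I_2) (x : R) : R :=
  let s := Num.sqrt (2 * l) in
  let a11 := 2 * l * p - s * (1 - p) + c in
  let a12 := 2 * l * p + s * (1 - p) + c in
  let a21 := expR (s * r) * (2 * l * q + s * (1 - q) + d) in
  let a22 := expR (- (s * r)) * (2 * l * q - s * (1 - q) + d) in
  let W := a11 * a22 - a12 * a21 in
  if j == ord0 then c / W * (a22 * expR (s * x) - a21 * expR (- (s * x)))
  else d / W * (a11 * expR (- (s * x)) - a12 * expR (s * x)).

Definition ellA (j : 'I_2) : R :=
  if j == ord0 then c / gW * (gE^-1 * gD) else - (d / gW * ga12).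
Definition ellB (j : 'I_2) : R :=
  if j == ord0 then - (c / gW * (gE * gC)) else d / gW * ga11.

Lemma ellg_ex j x : ellg j x = ex sg (ellA j) (ellB j) x.
Proof.
rewrite /ellg /ex /ellA /ellB /gW /gE -/sg -/ga11 -/ga12 -/gC -/gD !expRN.
by case: (j == ord0); ring.
Qed.

Hypotheses (l0 : 0 < l) (r0 : 0 < r) (p0 : 0 <= p) (p1 : p <= 1)
  (q0 : 0 <= q) (q1 : q <= 1) (c0 : 0 < c) (d0 : 0 < d).

Ltac cph := have L0 := l0; have R0 := r0; have P0 := p0; have P1 := p1;
  have Q0 := q0; have Q1 := q1; have C0 := c0; have D0 := d0.

Lemma sg_gt0 : 0 < sg. Proof. by rewrite sqrtr_gt0 mulr_gt0. Qed.
Lemma sg2 : sg ^+ 2 = 2 * l. Proof. by rewrite sqr_sqrtr // mulr_ge0 // ltW. Qed.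
Lemma gE_gt1 : 1 < gE. Proof. by rewrite expR_gt1 mulr_gt0 // sg_gt0. Qed.

Lemma gW_lt0 : gW < 0.
Proof.
cph. have s0 := sg_gt0; have E1 := gE_gt1.
have h1p : 0 <= 1 - p by lra.
have h1q : 0 <= 1 - q by lra.
have sp : 0 <= sg * (1 - p) by apply: mulr_ge0 => //; exact: ltW.
have sq : 0 <= sg * (1 - q) by apply: mulr_ge0 => //; exact: ltW.
have lp : 0 <= l * p by apply: mulr_ge0; lra.
have lq : 0 <= l * q by apply: mulr_ge0; lra.
have hBA : 0 <= ga12 - ga11 by rewrite /ga12 /ga11; lra.
have hBA' : 0 < ga12 + ga11 by rewrite /ga12 /ga11; lra.
have hCD : 0 <= gC - gD by rewrite /gC /gD; lra.
have hCD' : 0 < gC + gD by rewrite /gC /gD; lra.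
have hAD : ga11 * gD <= ga12 * gC.
  have := mulr_ge0 hBA (ltW hCD'); have := mulr_ge0 (ltW hBA') hCD. nra.
have hB : 0 < ga12 by lra.
have hC : 0 < gC by lra.
have E0 : 0 < gE by lra.
have -> : gW = (ga11 * gD - ga12 * gC * gE ^+ 2) / gE.
  by rewrite /gW; field; lra.
rewrite ltr_pdivrMr // mul0r.
have : 0 < ga12 * gC * (gE ^+ 2 - 1).
  apply: mulr_gt0; first exact: mulr_gt0. nra.
nra.
Qed.

Definition ellg' j x := ex sg (sg * ellA j) (- (sg * ellB j)) x.

Lemma gW_neq0 : gW != 0. Proof. by rewrite ltr0_neq0 // gW_lt0. Qed.
Lemma gE_neq0 : gE != 0. Proof. by rewrite gt_eqF // expR_gt0. Qed.

Lemma gWE : ga11 * gD + - (ga12 * (gE * gC)) * gE != 0.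
Proof.
have W0 := gW_neq0; have E0 := gE_neq0.
have -> : ga11 * gD + - (ga12 * (gE * gC)) * gE = gW * gE.
  by rewrite /gW; field.
exact: mulf_neq0.
Qed.

Lemma ellg_BC0 j :
  p * (2 * l * ellg j 0) - (1 - p) * ellg' j 0 + c * ellg j 0
  = if j == ord0 then c else 0.
Proof.
rewrite /ellg' ellg_ex /ex mulr0 oppr0 expR0 /ellA /ellB.
have W0 := gW_neq0; have E0 := gE_neq0.
have hW : gW = ga11 * (gE^-1 * gD) - ga12 * (gE * gC) by [].
have WE : (2 * l * p - sg * (1 - p) + c) * gD +
   - ((2 * l * p + sg * (1 - p) + c) * (gE * gC)) * gE != 0.
  have -> : (2 * l * p - sg * (1 - p) + c) * gD +
   - ((2 * l * p + sg * (1 - p) + c) * (gE * gC)) * gE = gW * gE.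
    by rewrite hW /ga11 /ga12; field.
  exact: mulf_neq0.
by case: (j == ord0); rewrite hW /ga11 /ga12; field; rewrite E0 WE.
Qed.

Lemma ellg_BCr j :
  q * (2 * l * ellg j r) + (1 - q) * ellg' j r + d * ellg j r
  = if j == ord0 then 0 else d.
Proof.
rewrite /ellg' ellg_ex /ex !expRN -/gE /ellA /ellB.
have W0 := gW_neq0; have E0 := gE_neq0.
have hW : gW = ga11 * (gE^-1 * gD) - ga12 * (gE * gC) by [].
by case: (j == ord0); rewrite hW /gC /gD; field; apply/andP; split => //; exact: gWE.
Qed.

Lemma ellg_y j x : ellg j x = ellA j * expR (sg * x) + ellB j / expR (sg * x).
Proof. by rewrite ellg_ex /ex expRN. Qed.

Lemma y_bounds x : 0 <= x <= r -> 1 <= expR (sg * x) <= gE.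
Proof.
move=> /andP[x0 xr]; have s0 := sg_gt0.
rewrite /gE -expR0 !ler_expR; apply/andP; split.
  by rewrite mulr_ge0 // ltW.
by rewrite ler_pM2l.
Qed.

Lemma ellg_ge0 j x : 0 <= x <= r -> 0 <= ellg j x.
Proof.
cph. move=> xr; have /andP[y1 yE] := y_bounds x xr.
have s0 := sg_gt0; have W0 := gW_lt0; have E1 := gE_gt1.
set y := expR (sg * x) in y1 yE *.
have sp : 0 <= sg * (1 - p) by apply: mulr_ge0; [exact: ltW| lra].
have sq : 0 <= sg * (1 - q) by apply: mulr_ge0; [exact: ltW| lra].
have lp : 0 <= l * p by apply: mulr_ge0; lra.
have lq : 0 <= l * q by apply: mulr_ge0; lra.
have hBA : ga11 <= ga12 by rewrite /ga12 /ga11; lra.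
have hB : 0 < ga12 by rewrite /ga12; lra.
have hCD : gD <= gC by rewrite /gC /gD; lra.
have hC : 0 < gC by rewrite /gC; lra.
have y0 : 0 < y by lra.
rewrite ellg_y /ellA /ellB -/y.
case: (j == ord0).
- have -> : c / gW * (gE^-1 * gD) * y + - (c / gW * (gE * gC)) / y
      = (c * (gC * gE ^+ 2 - gD * y ^+ 2)) / ((- gW) * gE * y).
    by field; rewrite gW_neq0 gE_neq0 gt_eqF.
  apply: divr_ge0; last by apply: mulr_ge0; [apply: mulr_ge0|]; lra.
  apply: mulr_ge0; first lra.
  have h1 : gD * y ^+ 2 <= gC * y ^+ 2 by apply: ler_wpM2r => //; exact: sqr_ge0.
  have h2 : y ^+ 2 <= gE ^+ 2 by rewrite lerXn2r // ?nnegrE; lra.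
  have h3 : gC * y ^+ 2 <= gC * gE ^+ 2 by apply: ler_wpM2l => //; lra.
  lra.
- have -> : - (d / gW * ga12) * y + d / gW * ga11 / y
      = (d * (ga12 * y ^+ 2 - ga11)) / ((- gW) * y).
    by field; rewrite gW_neq0 gt_eqF.
  apply: divr_ge0; last by apply: mulr_ge0; lra.
  apply: mulr_ge0; first lra.
  have h2 : 1 <= y ^+ 2 by rewrite -(expr1n _ 2) lerXn2r // ?nnegrE; lra.
  have h3 : ga12 <= ga12 * y ^+ 2 by rewrite ler_peMr //; lra.
  lra.
Qed.

Definition hsum x := ellg ord0 x + ellg ord_max x.

Lemma hsum0_lt1 : hsum 0 < 1.
Proof.
cph. have s0 := sg_gt0; have W0 := gW_lt0; have E1 := gE_gt1.
have sp : 0 <= sg * (1 - p) by apply: mulr_ge0; [exact: ltW| lra].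
have sq : 0 <= sg * (1 - q) by apply: mulr_ge0; [exact: ltW| lra].
have lp : 0 <= l * p by apply: mulr_ge0; lra.
have lq : 0 <= l * q by apply: mulr_ge0; lra.
have E0 : 0 < gE by lra.
set X0 := (2 * l * q + d) * (gE ^+ 2 - 1) + sg * (1 - q) * (gE ^+ 2 + 1).
set Y0 := 2 * l * q * (gE ^+ 2 + 1) + d * (gE - 1) ^+ 2 + sg * (1 - q) * (gE ^+ 2 - 1).
have hE2 : 0 < gE ^+ 2 - 1 by nra.
have X0p : 0 < X0.
  rewrite /X0; have : 0 < d * (gE ^+ 2 - 1) by exact: mulr_gt0.
  have : 0 <= 2 * l * q * (gE ^+ 2 - 1) by apply: mulr_ge0; nra.
  have : 0 <= sg * (1 - q) * (gE ^+ 2 + 1) by apply: mulr_ge0; nra.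
  lra.
have Y0p : 0 < Y0.
  rewrite /Y0; have : 0 < d * (gE - 1) ^+ 2 by apply: mulr_gt0 => //; nra.
  have : 0 <= 2 * l * q * (gE ^+ 2 + 1) by apply: mulr_ge0; nra.
  have : 0 <= sg * (1 - q) * (gE ^+ 2 - 1) by apply: mulr_ge0; nra.
  lra.
have ap : 0 < 2 * l * p * X0 + sg * (1 - p) * Y0.
  have [pl|pg] := lerP p (1/2).
    have : 0 < sg * (1 - p) * Y0 by apply: mulr_gt0 => //; apply: mulr_gt0; lra.
    have : 0 <= 2 * l * p * X0 by apply: mulr_ge0; nra.
    lra.
  have : 0 < 2 * l * p * X0 by apply: mulr_gt0 => //; nra.
  have : 0 <= sg * (1 - p) * Y0 by apply: mulr_ge0; nra.
  lra.
have -> : hsum 0 = 1 + (2 * l * p * X0 + sg * (1 - p) * Y0) / (gW * gE).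
  rewrite /hsum !ellg_y /ellA /ellB /= mulr0 expR0 /X0 /Y0 /gW /gC /gD /ga11 /ga12.
  by field; apply/andP; split; [exact: gE_neq0 | exact: gWE].
have : 0 < (2 * l * p * X0 + sg * (1 - p) * Y0) / (- gW * gE).
  by apply: divr_gt0 => //; apply: mulr_gt0; lra.
rewrite -[gW * gE]opprK -mulNr invrN mulrN; lra.
Qed.

Lemma hsumr_lt1 : hsum r < 1.
Proof.
cph. have s0 := sg_gt0; have W0 := gW_lt0; have E1 := gE_gt1.
have sp : 0 <= sg * (1 - p) by apply: mulr_ge0; [exact: ltW| lra].
have sq : 0 <= sg * (1 - q) by apply: mulr_ge0; [exact: ltW| lra].
have lp : 0 <= l * p by apply: mulr_ge0; lra.
have lq : 0 <= l * q by apply: mulr_ge0; lra.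
have E0 : 0 < gE by lra.
set X0 := (2 * l * p + c) * (gE ^+ 2 - 1) + sg * (1 - p) * (gE ^+ 2 + 1).
set Y0 := 2 * l * p * (gE ^+ 2 + 1) + c * (gE - 1) ^+ 2 + sg * (1 - p) * (gE ^+ 2 - 1).
have hE2 : 0 < gE ^+ 2 - 1 by nra.
have X0p : 0 < X0.
  rewrite /X0; have : 0 < c * (gE ^+ 2 - 1) by exact: mulr_gt0.
  have : 0 <= 2 * l * p * (gE ^+ 2 - 1) by apply: mulr_ge0; nra.
  have : 0 <= sg * (1 - p) * (gE ^+ 2 + 1) by apply: mulr_ge0; nra.
  lra.
have Y0p : 0 < Y0.
  rewrite /Y0; have : 0 < c * (gE - 1) ^+ 2 by apply: mulr_gt0 => //; nra.
  have : 0 <= 2 * l * p * (gE ^+ 2 + 1) by apply: mulr_ge0; nra.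
  have : 0 <= sg * (1 - p) * (gE ^+ 2 - 1) by apply: mulr_ge0; nra.
  lra.
have ap : 0 < 2 * l * q * X0 + sg * (1 - q) * Y0.
  have [pl|pg] := lerP q (1/2).
    have : 0 < sg * (1 - q) * Y0 by apply: mulr_gt0 => //; apply: mulr_gt0; lra.
    have : 0 <= 2 * l * q * X0 by apply: mulr_ge0; nra.
    lra.
  have : 0 < 2 * l * q * X0 by apply: mulr_gt0 => //; nra.
  have : 0 <= sg * (1 - q) * Y0 by apply: mulr_ge0; nra.
  lra.
have -> : hsum r = 1 + (2 * l * q * X0 + sg * (1 - q) * Y0) / (gW * gE).
  rewrite /hsum !ellg_y /ellA /ellB /= -/gE /X0 /Y0 /gW /gC /gD /ga11 /ga12.
  by field; apply/andP; split; [exact: gE_neq0 | exact: gWE].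
have : 0 < (2 * l * q * X0 + sg * (1 - q) * Y0) / (- gW * gE).
  by apply: divr_gt0 => //; apply: mulr_gt0; lra.
rewrite -[gW * gE]opprK -mulNr invrN mulrN; lra.
Qed.

Definition thg := Num.max (Num.max (hsum 0) (hsum r)) 0.

Lemma thg_lt1 : thg < 1.
Proof. by rewrite /thg !gt_max hsum0_lt1 hsumr_lt1 ltr01. Qed.

Lemma thg_ge0 : 0 <= thg.
Proof. by rewrite /thg le_max lexx orbT. Qed.

Lemma hsum_le x : 0 <= x <= r -> hsum x <= thg.
Proof.
move=> xr; have /andP[y1 yE] := y_bounds x xr.
set P := ellA ord0 + ellA ord_max; set Q := ellB ord0 + ellB ord_max.
have hy z : hsum z = P * expR (sg * z) + Q / expR (sg * z).
  by rewrite /hsum !ellg_y /P /Q; ring.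
rewrite /thg !hy mulr0 expR0 -/gE divr1 mulr1.
exact: conv_bound.
Qed.

Lemma ellg_fun j : ellg j = ex sg (ellA j) (ellB j).
Proof. by apply/funext => x; rewrite ellg_ex. Qed.

Lemma D_ellg (j : 'I_2) (x : R) : is_derive x 1 (ellg j) (ellg' j x).
Proof. by rewrite ellg_fun; exact: D_ex. Qed.

Lemma D_ellg' (j : 'I_2) (x : R) : is_derive x 1 (ellg' j) (2 * l * ellg j x).
Proof.
have -> : ellg' j = ex sg (sg * ellA j) (- (sg * ellB j)) by [].
have -> : 2 * l * ellg j x = ex sg (sg * (sg * ellA j)) (- (sg * - (sg * ellB j))) x.
  by rewrite ellg_ex /ex -sg2; ring.
exact: D_ex.
Qed.

Lemma cont_ellg j : continuous (ellg j).
Proof. by rewrite ellg_fun; exact: cont_ex. Qed.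

Lemma cont_ellg' j : continuous (ellg' j).
Proof. exact: cont_ex. Qed.
End EllAlg.
Section Integ.
Context {R : realType}.
Variable mu : {measure set R -> \bar R}.

Lemma int_cont (a b : R) (f : R -> R) : (mu `[a, b]%classic < +oo)%E ->
  {within `[a, b], continuous f} -> mu.-integrable `[a, b] (EFin \o f).
Proof.
move=> fin ctsfA; apply: measurable_bounded_integrable => //.
- by apply: subspace_continuous_measurable_fun => //.
- have /compact_bounded[M [_ mrt]] := continuous_compact ctsfA (@segment_compact _ a b).
  by exists M; split; rewrite ?num_real // => ? ? ? ?; exact: mrt.
Qed.
End Integ.
Section Meas.
Context {R : realType} (N : nat) (r : 'I_N -> R).
Variable mu : 'I_N -> {measure set R -> \bar R}.
Hypothesis hmu : subprobS r mu.

Lemma mu_setT_le1 k : (mu k setT <= 1)%E.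
Proof.
case: hmu => _ H; apply: le_trans H.
rewrite (bigD1 k) //= leeDl // sume_ge0 // => i _; exact: measure_ge0.
Qed.

Lemma mu_itv_le k : (mu k `[0%R, r k]%classic <= mu k setT)%E.
Proof. by apply: le_measure; rewrite ?inE. Qed.

Lemma mu_fin k : (mu k `[0%R, r k]%classic < +oo)%E.
Proof. by apply: (le_lt_trans (mu_itv_le k)); apply: (le_lt_trans (mu_setT_le1 k)); rewrite ltry. Qed.

Lemma mu_sum_le1 : \sum_(k < N) fine (mu k `[0%R, r k]%classic) <= 1.
Proof.
rewrite -lee_fin -sumEFin; case: hmu => _ H; apply: le_trans H.
apply: lee_sum => k _; rewrite fineK; first exact: mu_itv_le.
by rewrite ge0_fin_numE ?mu_fin ?measure_ge0.
Qed.
End Meas.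
Section C2.
Context {R : realType}.

Lemma sum2 (F : 'I_2 -> R) : \sum_(j < 2) F j = F ord0 + F ord_max.
Proof. by rewrite big_ord_recr big_ord1 /=; congr (F _ + _); exact: val_inj. Qed.

Lemma cont_lin2 (e0 e1 : R -> R) (a b : R) : continuous e0 -> continuous e1 ->
  continuous (fun x => a * e0 x + b * e1 x).
Proof.
move=> h0 h1 x; apply: cvgD; apply: cvgM; try exact: cvg_cst.
  exact: h0. exact: h1.
Qed.

Lemma C2_lin (rr k a b : R) (F F1 F2 e0 e0' e1 e1' : R -> R) :
  C2_on 0 rr F F1 F2 ->
  (forall x : R, is_derive x 1 e0 (e0' x)) -> (forall x : R, is_derive x 1 e0' (k * e0 x)) ->
  (forall x : R, is_derive x 1 e1 (e1' x)) -> (forall x : R, is_derive x 1 e1' (k * e1 x)) ->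
  continuous e0 -> continuous e0' -> continuous e1 -> continuous e1' ->
  C2_on 0 rr (fun x => F x + (a * e0 x + b * e1 x))
    (fun x => F1 x + (a * e0' x + b * e1' x))
    (fun x => F2 x + (a * (k * e0 x) + b * (k * e1 x))).
Proof.
move=> [cF cF1 cF2 dF dF1] d0 d0' d1 d1' c0 c0' c1 c1'.
have ck : forall (e : R -> R), continuous e -> continuous (fun x => k * e x).
  move=> e ce x; apply: cvgM; [exact: cvg_cst | exact: ce].
split.
- by apply: within_continuousD => //; apply: continuous_subspaceT; exact: cont_lin2.
- by apply: within_continuousD => //; apply: continuous_subspaceT; exact: cont_lin2.
- apply: within_continuousD => //; apply: continuous_subspaceT.
  by apply: cont_lin2; apply: ck.
- move=> x hx.
  have -> : (fun x => F x + (a * e0 x + b * e1 x)) = F + (fun x => a * e0 x + b * e1 x) by [].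
  apply: is_deriveD; first exact: dF.
- move=> x hx.
  have -> : (fun x => F1 x + (a * e0' x + b * e1' x)) = F1 + (fun x => a * e0' x + b * e1' x) by [].
  apply: is_deriveD; first exact: dF1.
Qed.
End C2.
Section Linear.
Context {R : realType}.

Lemma sum_delta n (v : 'I_n -> R) j : \sum_(i < n) v i * (i == j)%:R = v j.
Proof.
rewrite (bigD1 j) //= eqxx mulr1 big1 ?addr0 // => i /negbTE ->; exact: mulr0.
Qed.

Lemma exists_sol (T : finType) (M : T -> T -> R) (b : T -> R) :
  (forall v : T -> R, (forall t, v t = \sum_s M t s * v s) -> forall t, v t = 0) ->
  exists u : T -> R, forall t, u t = b t + \sum_s M t s * u s.
Proof.
move=> huniq.
set n := #|T|.
have sumT (F : T -> R) : \sum_s F s = \sum_(i < n) F (enum_val i).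
  rewrite (reindex (@enum_val T (mem T))) //=.
  by exists enum_rank => x _; [exact: enum_valK | exact: enum_rankK].
pose A : 'M[R]_n := \matrix_(i, j) ((i == j)%:R - M (enum_val j) (enum_val i)).
have vA (v : 'rV[R]_n) j :
    (v *m A) 0 j = v 0 j - \sum_(i < n) M (enum_val j) (enum_val i) * v 0 i.
  rewrite mxE; under eq_bigr do rewrite mxE mulrBr.
  rewrite sumrB sum_delta; congr (_ - _); apply: eq_bigr => i _; exact: mulrC.
have Au : A \in unitmx.
  rewrite unitmxE unitfE; apply/negP => /det0P [v vn0 vA0].
  pose w t := v 0 (enum_rank t).
  have hw : forall t, w t = \sum_s M t s * w s.
    move=> t; rewrite sumT /w.
    have := vA v (enum_rank t); rewrite vA0 mxE enum_rankK => /eqP.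
    rewrite eq_sym subr_eq0 => /eqP ->; apply: eq_bigr => i _.
    by rewrite enum_valK.
  move/negP: vn0; apply; apply/eqP/matrixP => i j.
  rewrite ord1 mxE -(enum_valK j); exact: huniq hw _.
pose br : 'rV[R]_n := \row_i b (enum_val i).
pose ur := br *m invmx A.
exists (fun t => ur 0 (enum_rank t)) => t.
have := vA ur (enum_rank t); rewrite /ur mulmxKV // mxE enum_rankK => /eqP.
rewrite eq_sym subr_eq => /eqP ->; congr (_ + _).
by rewrite sumT; apply: eq_bigr => i _; rewrite enum_valK.
Qed.
End Linear.
Section Main.
Context {R : realType} (N : nat) (r p q c d : 'I_N -> R)
  (P : 'I_N -> 'I_2 -> 'I_N -> {measure set R -> \bar R})
  (Rr : R -> 'I_N -> (R -> R) -> R -> R) (l : R).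
Hypotheses (l0 : 0 < l) (hr : forall i, 0 < r i) (hp : forall i, 0 <= p i <= 1)
  (hq : forall i, 0 <= q i <= 1) (hc : forall i, 0 < c i) (hd : forall i, 0 < d i)
  (hP : forall i j, subprobS r (P i j))
  (hR : forall i, is_resolvent_i r p q c d l i (Rr l i)).

Local Notation el i := (ellg l (r i) (p i) (q i) (c i) (d i)).
Local Notation el' i := (ellg' l (r i) (p i) (q i) (c i) (d i)).
Local Notation ELL := (ell r p q c d l).
Local Notation ELLS := (ellS r p q c d l).
Local Notation IS := (Defs.intS r).

Lemma ellE i j x : ELL i j x = el i j x.
Proof. by []. Qed.

Lemma el_ge0 i j x : 0 <= x <= r i -> 0 <= el i j x.
Proof.
by case/andP: (hp i) => ? ?; case/andP: (hq i) => ? ?; apply: ellg_ge0.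
Qed.

Definition th i := thg l (r i) (p i) (q i) (c i) (d i).

Lemma th_lt1 i : th i < 1.
Proof.
by case/andP: (hp i) => ? ?; case/andP: (hq i) => ? ?; apply: thg_lt1.
Qed.

Lemma el_sum_le i x : 0 <= x <= r i -> el i ord0 x + el i ord_max x <= th i.
Proof. exact: hsum_le. Qed.

Definition Mx i j k m := Rintegral (P i j k) `[0, r k] (ELL k m).

Lemma intg i j k (f : R -> R) : {within `[0, r k], continuous f} ->
  (P i j k).-integrable `[0, r k] (EFin \o f).
Proof. by apply: int_cont; exact: mu_fin. Qed.

Lemma cont_ELL k m : continuous (ELL k m).
Proof. exact: (@cont_ellg R l (r k) (p k) (q k) (c k) (d k) m). Qed.

Lemma cont_el k m : {within `[0, r k], continuous (ELL k m)}.
Proof. apply: continuous_subspaceT; exact: cont_ellg. Qed.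

Lemma intS_ellS i j k m : IS (P i j) (ELLS k m) = Mx i j k m.
Proof.
rewrite /Defs.intS (bigD1 k) //= big1 ?addr0.
  by rewrite /ellS eqxx.
move=> k' /negbTE hk; rewrite /ellS hk.
by rewrite Rintegral_cst // mul0r.
Qed.

Lemma MxZ i j k m a :
  \int[P i j k]_(x in `[0, r k]) (a * ELL k m x) = a * Mx i j k m.
Proof. by rewrite RintegralZl //; apply: intg; exact: cont_el. Qed.

Lemma collapse (u : 'I_N -> 'I_2 -> R) k x :
  \sum_(i0 < N) \sum_(j0 < 2) u i0 j0 * ELLS i0 j0 k x
  = u k ord0 * ELL k ord0 x + u k ord_max * ELL k ord_max x.
Proof.
rewrite (bigD1 k) //= [X in _ + X = _]big1 ?addr0.
  by rewrite sum2 /ellS !eqxx.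
move=> i0 hi0; apply: big1 => j0 _.
by rewrite /ellS eq_sym (negbTE hi0) mulr0.
Qed.

Lemma L1 i j (F : 'I_N -> R -> R) (u : 'I_N -> 'I_2 -> R) :
  (forall k, {within `[0, r k], continuous (F k)}) ->
  IS (P i j) (fun k x => F k x + \sum_(i0 < N) \sum_(j0 < 2) u i0 j0 * ELLS i0 j0 k x)
  = IS (P i j) F + \sum_(i0 < N) \sum_(j0 < 2) u i0 j0 * IS (P i j) (ELLS i0 j0).
Proof.
move=> cF.
under [in RHS]eq_bigr do under eq_bigr do rewrite intS_ellS.
rewrite /Defs.intS -big_split /=; apply: eq_bigr => k _.
have -> : (fun x => F k x + \sum_(i0 < N) \sum_(j0 < 2) u i0 j0 * ELLS i0 j0 k x)
   = (fun x => F k x + (u k ord0 * ELL k ord0 x + u k ord_max * ELL k ord_max x)).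
  by apply/funext => x; rewrite collapse.
rewrite RintegralD //; first last.
- apply: intg; apply: continuous_subspaceT; apply: cont_lin2; exact: cont_ELL.
- exact: intg.
rewrite RintegralD //; first last.
- apply: intg; apply: continuous_subspaceT => x; apply: cvgM; [exact: cvg_cst | exact: cont_ELL].
- apply: intg; apply: continuous_subspaceT => x; apply: cvgM; [exact: cvg_cst | exact: cont_ELL].
by rewrite !MxZ sum2.
Qed.

Lemma Mx_ge0 i j k m : 0 <= Mx i j k m.
Proof.
apply: Rintegral_ge0 => x; rewrite /= in_itv /= => xr.
exact: el_ge0.
Qed.

Definition thM := \big[Num.max/0]_(k < N) th k.

Lemma le_bigmaxR n (f : 'I_n -> R) k : f k <= \big[Num.max/0]_(k0 < n) f k0.
Proof. by rewrite (bigD1 k) //= le_max lexx. Qed.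

Lemma bigmaxR_ge0 n (f : 'I_n -> R) : 0 <= \big[Num.max/0]_(k0 < n) f k0.
Proof. by elim/big_rec: _ => // i x _ hx; rewrite le_max hx orbT. Qed.

Lemma thM_lt1 : thM < 1.
Proof. rewrite /thM; elim/big_rec: _ => [|i x _ hx]; [exact: ltr01 | by rewrite gt_max hx th_lt1]. Qed.

Lemma th_ge0 k : 0 <= th k.
Proof. exact: thg_ge0. Qed.

Lemma Mx_row i j : \sum_(k < N) \sum_(m < 2) Mx i j k m <= thM.
Proof.
have hk : forall k, \sum_(m < 2) Mx i j k m <= thM * fine (P i j k `[0%R, r k]%classic).
  move=> k; rewrite sum2 /Mx -RintegralD //; try (apply: intg; apply: continuous_subspaceT;
    first [exact: (cont_ELL k ord0) | exact: (cont_ELL k ord_max)]).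
  apply: le_trans (_ : \int[P i j k]_(x in `[0, r k]) th k <= _).
    apply: le_Rintegral => //.
    - apply: intg; apply: continuous_subspaceT => x; apply: cvgD; [exact: (cont_ELL k ord0 x) | exact: (cont_ELL k ord_max x)].
    - by apply: intg; apply: continuous_subspaceT => x; exact: cvg_cst.
    - move=> x; rewrite /= in_itv /= => xr; exact: el_sum_le.
  rewrite Rintegral_cst //; apply: ler_wpM2r; first by apply: fine_ge0; exact: measure_ge0.
  exact: le_bigmaxR.
have H1 : \sum_(k < N) \sum_(m < 2) Mx i j k m <= \sum_(k < N) thM * fine (P i j k `[0%R, r k]%classic).
  by apply: ler_sum => k0 _; exact: hk.
apply: (le_trans H1); rewrite -mulr_sumr.
rewrite -[X in _ <= X]mulr1; apply: ler_wpM2l; first exact: bigmaxR_ge0.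
exact: mu_sum_le1.
Qed.

Lemma bigmaxR_le n (f : 'I_n -> R) B : 0 <= B -> (forall k, f k <= B) ->
  \big[Num.max/0]_(k0 < n) f k0 <= B.
Proof. by move=> B0 hf; elim/big_rec: _ => // i x _ hx; rewrite ge_max hf hx. Qed.

Lemma uniq_sol (v : 'I_N -> 'I_2 -> R) :
  (forall i j, v i j = \sum_(k < N) \sum_(m < 2) v k m * Mx i j k m) ->
  forall i j, v i j = 0.
Proof.
move=> hv.
set mv := \big[Num.max/0]_(k < N) \big[Num.max/0]_(m < 2) `|v k m|.
have mv0 : 0 <= mv by exact: bigmaxR_ge0.
have hle k m : `|v k m| <= mv.
  apply: le_trans (le_bigmaxR _ (fun m => `|v k m|) m) _.
  exact: (le_bigmaxR _ (fun k => \big[Num.max/0]_(m < 2) `|v k m|) k).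
have thM0 : 0 <= thM by exact: bigmaxR_ge0.
have hb i j : `|v i j| <= mv * thM.
  rewrite hv; apply: le_trans (ler_norm_sum _ _ _) _.
  have H1 : \sum_(k < N) `|\sum_(m < 2) v k m * Mx i j k m| <= \sum_(k < N) \sum_(m < 2) mv * Mx i j k m.
    apply: ler_sum => k _; apply: le_trans (ler_norm_sum _ _ _) _.
    apply: ler_sum => m _; rewrite normrM (ger0_norm (Mx_ge0 _ _ _ _)).
    by apply: ler_wpM2r; [exact: Mx_ge0 | exact: hle].
  apply: (le_trans H1).
  under eq_bigr do rewrite -mulr_sumr.
  rewrite -mulr_sumr; apply: ler_wpM2l => //; exact: Mx_row.
have hmv : mv <= mv * thM.
  apply: bigmaxR_le; first exact: mulr_ge0.
  move=> k; apply: bigmaxR_le; first exact: mulr_ge0.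
  move=> m; exact: hb.
have t1 := thM_lt1.
have : mv * (1 - thM) <= 0 by rewrite mulrBr mulr1 subr_le0.
rewrite pmulr_lle0; last by rewrite subr_gt0.
move=> mvle i j; apply/normr0_eq0; apply/eqP; rewrite eq_le normr_ge0 andbT.
by apply: le_trans (hle i j) _.
Qed.

Local Notation RDU := (Rdu Rr l).
Local Notation SYS := (coeff_system r p q c d P Rr l).
Local Notation COEFF := (coeff r p q c d P Rr l).
Local Notation RCO := (Rco r p q c d P Rr l).

Lemma sys_unique g u1 u2 : SYS g u1 -> SYS g u2 -> forall i j, u1 i j = u2 i j.
Proof.
move=> h1 h2 i j; apply/eqP; rewrite -subr_eq0; apply/eqP.
move: i j; apply: (uniq_sol (fun i j => u1 i j - u2 i j)) => i j.
rewrite h1 h2 opprD addrACA subrr add0r -sumrB; apply: eq_bigr => k _.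
rewrite -sumrB; apply: eq_bigr => m _; by rewrite intS_ellS mulrBl.
Qed.

Lemma sys_exists g : (forall k, {within `[0, r k], continuous (RDU g k)}) ->
  exists u, SYS g u.
Proof.
move=> cg.
have [u hu] : exists u : 'I_N * 'I_2 -> R, forall t, u t = IS (P t.1 t.2) (RDU g)
    + \sum_s Mx t.1 t.2 s.1 s.2 * u s.
  apply: exists_sol => v hv t.
  suff H : forall i j, v (i, j) = \sum_(k < N) \sum_(m < 2) v (k, m) * Mx i j k m.
    by case: t => i j; exact: (uniq_sol (fun i j => v (i, j)) H).
  move=> i j; rewrite (hv (i, j)) pair_bigA /=.
  by apply: eq_bigr => [[k m]] _ /=; rewrite mulrC.
exists (fun i j => u (i, j)) => i j.
rewrite (hu (i, j)) /=; congr (_ + _).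
rewrite pair_bigA /=.
by apply: eq_bigr => [[k m]] _ /=; rewrite intS_ellS mulrC.
Qed.

Lemma coeff_spec g : (forall k, {within `[0, r k], continuous (RDU g k)}) ->
  SYS g (COEFF g).
Proof. by move=> cg; apply: epsilon_spec; exact: sys_exists. Qed.

Lemma coeff_eq g u : (forall k, {within `[0, r k], continuous (RDU g k)}) ->
  SYS g u -> forall i j, COEFF g i j = u i j.
Proof. by move=> cg hu; apply: sys_unique => //; exact: coeff_spec. Qed.

Lemma IS_RCO g i j : (forall k, {within `[0, r k], continuous (RDU g k)}) ->
  IS (P i j) (RCO g) = COEFF g i j.
Proof.
move=> cg; rewrite (coeff_spec g cg i j).
exact: (L1 i j (RDU g) (COEFF g) cg).
Qed.

Lemma RCO_eq g i : RCO g i = fun x => RDU g i x +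
   (COEFF g i ord0 * ELL i ord0 x + COEFF g i ord_max * ELL i ord_max x).
Proof. by apply/funext => x; rewrite /Rco collapse. Qed.

Lemma BC0 i j : p i * (2 * l * el i j 0) - (1 - p i) * el' i j 0 + c i * el i j 0
  = if j == ord0 then c i else 0.
Proof.
by case/andP: (hp i) => ? ?; case/andP: (hq i) => ? ?; apply: ellg_BC0.
Qed.

Lemma BCr i j : q i * (2 * l * el i j (r i)) + (1 - q i) * el' i j (r i) + d i * el i j (r i)
  = if j == ord0 then 0 else d i.
Proof.
by case/andP: (hp i) => ? ?; case/andP: (hq i) => ? ?; apply: ellg_BCr.
Qed.

Lemma C2_el i (F F1 F2 : R -> R) a b : C2_on 0 (r i) F F1 F2 ->
  C2_on 0 (r i) (fun x => F x + (a * el i ord0 x + b * el i ord_max x))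
    (fun x => F1 x + (a * el' i ord0 x + b * el' i ord_max x))
    (fun x => F2 x + (a * (2 * l * el i ord0 x) + b * (2 * l * el i ord_max x))).
Proof.
move=> hF; apply: C2_lin => //.
- exact: D_ellg.
- exact: D_ellg'.
- exact: D_ellg.
- exact: D_ellg'.
- exact: cont_ellg.
- exact: cont_ellg'.
- exact: cont_ellg.
- exact: cont_ellg'.
Qed.

Lemma part1 g : contS r g ->
  graphA r p q c d P (RCO g) (fun i x => l * RCO g i x - g i x).
Proof.
move=> hg.
have cR k : graphAi r p q c d k (Rr l k (g k)) (fun x => l * Rr l k (g k) x - g k x).
  exact: (hR k).1.
have cg k : {within `[0, r k], continuous (RDU g k)}.
  by have [F1 [F2 [[]]]] := cR k.
move=> i; have [F1 [F2 [hC2 b0 br hF2]]] := cR i.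
set u := COEFF g.
exists (fun x => F1 x + (u i ord0 * el' i ord0 x + u i ord_max * el' i ord_max x)).
exists (fun x => F2 x + (u i ord0 * (2 * l * el i ord0 x) + u i ord_max * (2 * l * el i ord_max x))).
rewrite !(RCO_eq g i) !IS_RCO //.
have e00 := BC0 i ord0; have e01 := BC0 i ord_max.
have er0 := BCr i ord0; have er1 := BCr i ord_max.
rewrite /= in e00 e01 er0 er1.
split.
- exact: C2_el.
- rewrite -/u.
  have -> : p i * (F2 0 + (u i ord0 * (2 * l * el i ord0 0) + u i ord_max * (2 * l * el i ord_max 0))) -
    (1 - p i) * (F1 0 + (u i ord0 * el' i ord0 0 + u i ord_max * el' i ord_max 0)) +
    c i * (Rr l i (g i) 0 + (u i ord0 * ELL i ord0 0 + u i ord_max * ELL i ord_max 0))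
    = (p i * F2 0 - (1 - p i) * F1 0 + c i * Rr l i (g i) 0)
      + u i ord0 * (p i * (2 * l * el i ord0 0) - (1 - p i) * el' i ord0 0 + c i * el i ord0 0)
      + u i ord_max * (p i * (2 * l * el i ord_max 0) - (1 - p i) * el' i ord_max 0 + c i * el i ord_max 0).
    by rewrite !ellE; ring.
  by rewrite b0 e00 e01; ring.
- rewrite -/u.
  have -> : q i * (F2 (r i) + (u i ord0 * (2 * l * el i ord0 (r i)) + u i ord_max * (2 * l * el i ord_max (r i)))) +
    (1 - q i) * (F1 (r i) + (u i ord0 * el' i ord0 (r i) + u i ord_max * el' i ord_max (r i))) +
    d i * (Rr l i (g i) (r i) + (u i ord0 * ELL i ord0 (r i) + u i ord_max * ELL i ord_max (r i)))
    = (q i * F2 (r i) + (1 - q i) * F1 (r i) + d i * Rr l i (g i) (r i))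
      + u i ord0 * (q i * (2 * l * el i ord0 (r i)) + (1 - q i) * el' i ord0 (r i) + d i * el i ord0 (r i))
      + u i ord_max * (q i * (2 * l * el i ord_max (r i)) + (1 - q i) * el' i ord_max (r i) + d i * el i ord_max (r i)).
    by rewrite !ellE; ring.
  by rewrite br er0 er1; ring.
- move=> x hx; have := hF2 x hx => /= h2.
  have -> : F2 x = 2 * (l * Rr l i (g i) x - g i x) by rewrite h2; field.
  by rewrite -/u !ellE /Rdu; field.
Qed.

Lemma part2 f h : graphA r p q c d P f h ->
  forall i x, x \in `[0, r i] ->
    RCO (fun k y => l * f k y - h k y) i x = f i x.
Proof.
move=> hA.
set a := fun i j => IS (P i j) f.
set g := fun k y => l * f k y - h k y.
pose phi k y := f k y + ((- a k ord0) * el k ord0 y + (- a k ord_max) * el k ord_max y).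
have key k : (forall y, y \in `[0, r k] -> RDU g k y = phi k y)
    /\ {within `[0, r k], continuous (phi k)}.
  have [f1 [f2 [hC2 b0 br hf2]]] := hA k.
  have hC2' := C2_el k (f k) f1 f2 (- a k ord0) (- a k ord_max) hC2.
  split; last by case: hC2'.
  have gphi : graphAi r p q c d k (phi k)
      (fun y => h k y - l * (a k ord0 * el k ord0 y + a k ord_max * el k ord_max y)).
    exists (fun y => f1 y + ((- a k ord0) * el' k ord0 y + (- a k ord_max) * el' k ord_max y)).
    exists (fun y => f2 y + ((- a k ord0) * (2 * l * el k ord0 y) + (- a k ord_max) * (2 * l * el k ord_max y))).
    have e00 := BC0 k ord0; have e01 := BC0 k ord_max.
    have er0 := BCr k ord0; have er1 := BCr k ord_max.
    rewrite /= in e00 e01 er0 er1.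
    split.
    + exact: hC2'.
    + rewrite /phi.
      have -> : p k * (f2 0 + (- a k ord0 * (2 * l * el k ord0 0) + - a k ord_max * (2 * l * el k ord_max 0))) -
        (1 - p k) * (f1 0 + (- a k ord0 * el' k ord0 0 + - a k ord_max * el' k ord_max 0)) +
        c k * (f k 0 + (- a k ord0 * el k ord0 0 + - a k ord_max * el k ord_max 0))
        = (p k * f2 0 - (1 - p k) * f1 0 + c k * f k 0)
          - a k ord0 * (p k * (2 * l * el k ord0 0) - (1 - p k) * el' k ord0 0 + c k * el k ord0 0)
          - a k ord_max * (p k * (2 * l * el k ord_max 0) - (1 - p k) * el' k ord_max 0 + c k * el k ord_max 0).
        by ring.
      by rewrite b0 e00 e01 /a; ring.
    + rewrite /phi.
      have -> : q k * (f2 (r k) + (- a k ord0 * (2 * l * el k ord0 (r k)) + - a k ord_max * (2 * l * el k ord_max (r k)))) +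
        (1 - q k) * (f1 (r k) + (- a k ord0 * el' k ord0 (r k) + - a k ord_max * el' k ord_max (r k))) +
        d k * (f k (r k) + (- a k ord0 * el k ord0 (r k) + - a k ord_max * el k ord_max (r k)))
        = (q k * f2 (r k) + (1 - q k) * f1 (r k) + d k * f k (r k))
          - a k ord0 * (q k * (2 * l * el k ord0 (r k)) + (1 - q k) * el' k ord0 (r k) + d k * el k ord0 (r k))
          - a k ord_max * (q k * (2 * l * el k ord_max (r k)) + (1 - q k) * el' k ord_max (r k) + d k * el k ord_max (r k)).
        by ring.
      by rewrite br er0 er1 /a; ring.
    + by move=> y hy; rewrite (hf2 y hy); field.
  move=> y hy; rewrite /Rdu.
  apply: ((hR k).2 _ _ gphi (g k)) => // z hz.
  by rewrite /g /phi; ring.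
have cg k : {within `[0, r k], continuous (RDU g k)}.
  have [e ce] := key k.
  apply: subspace_eq_continuous ce => y; rewrite inE /= => hy.
  by symmetry; apply: e.
have sa : SYS g a.
  move=> i j; rewrite /a.
  rewrite -(L1 i j (RDU g) a cg).
  rewrite /Defs.intS; apply: eq_bigr => k _; apply: eq_Rintegral => y.
  rewrite inE /= => hy.
  by rewrite collapse (key k).1 // /phi !ellE; ring.
move=> i x hx.
by rewrite (RCO_eq g i) (key i).1 // !(coeff_eq g a cg sa) /phi !ellE; ring.
Qed.
End Main.

Theorem corollary3 (R : realType) (N : nat) (r p q c d : 'I_N -> R)
  (P : 'I_N -> 'I_2 -> 'I_N -> {measure set R -> \bar R})
  (Rr : R -> 'I_N -> (R -> R) -> R -> R) :
  (0 < N)%N ->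
  (forall i, 0 < r i) ->
  (forall i, 0 <= p i <= 1) -> (forall i, 0 <= q i <= 1) ->
  (forall i, 0 < c i) -> (forall i, 0 < d i) ->
  (forall i j, subprobS r (P i j)) ->
  (forall l, 0 < l -> forall i, is_resolvent_i r p q c d l i (Rr l i)) ->
  forall l, 0 < l ->
    (* range of R^co_l is contained in D(A), and A R^co_l g = l R^co_l g - g *)
    (forall g, contS r g ->
       graphA r p q c d P (Rco r p q c d P Rr l g)
         (fun i x => l * Rco r p q c d P Rr l g i x - g i x)) /\
    (* D(A) is contained in the range of R^co_l, and R^co_l (l f - A f) = f *)
    (forall f h, graphA r p q c d P f h ->
       forall i x, x \in `[0, r i] ->
         Rco r p q c d P Rr l (fun k y => l * f k y - h k y) i x = f i x).
Proof.
move=> N0 hr hp hq hc hd hP hRall l l0; split.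
- move=> g hg.
  exact: (part1 N r p q c d P Rr l l0 hr hp hq hc hd hP (hRall l l0) g hg).
- move=> f h hA i x hx.
  exact: (part2 N r p q c d P Rr l l0 hr hp hq hc hd hP (hRall l l0) f h hA i x hx).
Qed.
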